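(* Let $d\ge 2$, let $\Omega=(a_1,b_1)\times\cdots\times(a_d,b_d)$, and let $\mathcal{T}_{\mathbf h}$, $\mathcal{T}_{\mathbf h}'$, $\mathcal S_{\mathbf h}$ and the matrices $\widetilde{D}_{ij,0},\widehat{D}_{ij,0},\overline{D}_{ij,0}\in\mathbb R^{J_0\times J_0}$ be as described in the context. Then for all $i,j\in\{1,\dots,d\}$ the matrix $\widetilde{D}_{ij,0}-\widehat{D}_{ij,0}$ is symmetric positive definite. Furthermore, $-\widehat{D}_{ij,0} > -\overline{D}_{ij,0} > -\widetilde{D}_{ij,0}$ for all $i,j\in\{1,\dots,d\}$, where for matrices $X>Y$ means that $X-Y$ is symmetric positive definite.
   Context: Grid: for integers $J_i\ge 2$ put $h_i=(b_i-a_i)/(J_i-1)$, $\mathbf h=(h_1,\dots,h_d)$, and nodes $\mathbf x_\alpha=(a_1+(\alpha_1-1)h_1,\dots,a_d+(\alpha_d-1)h_d)$ for multi-indices $\alpha$ with $1\le\alpha_i\le J_i$; $\mathcal T_{\mathbf h}$ is the set of these nodes. The extended mesh is $\mathcal T_{\mathbf h}'=\mathcal T_{\mathbf h}\cup\{\mathbf y\pm 2h_i\mathbf e_i:\mathbf y\in\mathcal T_{\mathbf h}\cap\Omega,\ 1\le i\le d\}$ (the added points, lying outside $\overline\Omega$, are ghost points); $\{\mathbf e_i\}$ is the canonical basis. For a grid function $V$ on $\mathcal T_{\mathbf h}'$ write $V_\alpha=V(\mathbf x_\alpha)$ and define $\delta^+_{x_i,h_i}V(\mathbf x)=(V(\mathbf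 x+h_i\mathbf e_i)-V(\mathbf x))/h_i$, $\delta^-_{x_i,h_i}V(\mathbf x)=(V(\mathbf x)-V(\mathbf x-h_i\mathbf e_i))/h_i$, $\delta^2_{x_i,h_i}V(\mathbf x)=(V(\mathbf x-h_i\mathbf e_i)-2V(\mathbf x)+V(\mathbf x+h_i\mathbf e_i))/h_i^2$, $\Delta_{\mathbf h}=\sum_{i=1}^d\delta^2_{x_i,h_i}$, and $\widehat\delta^2_{x_i,x_j;h_i,h_j}=\tfrac12(\delta^-_{x_j,h_j}\delta^+_{x_i,h_i}+\delta^+_{x_j,h_j}\delta^-_{x_i,h_i})$, $\widetilde\delta^2_{x_i,x_j;h_i,h_j}=\tfrac12(\delta^+_{x_j,h_j}\delta^+_{x_i,h_i}+\delta^-_{x_j,h_j}\delta^-_{x_i,h_i})$, $\overline\delta^2_{x_i,x_j;h_i,h_j}=\tfrac12(\widehat\delta^2_{x_i,x_j;h_i,h_j}+\widetilde\delta^2_{x_i,x_j;h_i,h_j})$. Let $\mathcal S_{\mathbf h}$ be the set of boundary nodes $\mathbf x_\alpha\in\mathcal T_{\mathbf h}\cap\partial\Omega$ such that $\mathbf x_\alpha+h_i\mathbf e_i\in\mathcal T_{\mathbf h}\cap\Omega$ or $\mathbf x_\alpha-h_i\mathbf e_i\in\mathcal T_{\mathbf h}\cap\Omega$ for some $i$. Let $J_0=|\mathcal T_{\mathbf h}\cap\Omega|$. Every vector in $\mathbb R^{J_0}$ (values at interior nodes) is extended to a grid function $V$ on $\mathcal T_{\mathbf h}'$ by setting $V=0$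 on $\mathcal T_{\mathbf h}\cap\partial\Omega$ and choosing the ghost values so that $\Delta_{\mathbf h}V_\alpha=0$ for all $\mathbf x_\alpha\in\mathcal S_{\mathbf h}$. Then $\widetilde D_{ij,0}$, $\widehat D_{ij,0}$, $\overline D_{ij,0}$ denote the $J_0\times J_0$ matrices representing the linear maps $V\mapsto(\widetilde\delta^2_{x_i,x_j;h_i,h_j}V_\alpha)_{\mathbf x_\alpha\in\mathcal T_{\mathbf h}\cap\Omega}$, $V\mapsto(\widehat\delta^2_{x_i,x_j;h_i,h_j}V_\alpha)$, $V\mapsto(\overline\delta^2_{x_i,x_j;h_i,h_j}V_\alpha)$ respectively, with this extension built in. *)

(* Defs.v *)
From HB Require Import structures.
From mathcomp Require Import all_boot all_order all_algebra.
From mathcomp Require Import reals.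
Set Implicit Arguments. Unset Strict Implicit. Unset Printing Implicit Defensive.
Import Order.TTheory GRing.Theory Num.Theory.
Local Open Scope ring_scope.

Section Grid.
Variables (R : realType) (d : nat) (a b : 'I_d -> R) (J : 'I_d -> nat).

(* The lattice point
   beta corresponds to the point with coordinates a_k + beta_k h_k, i.e. to
   the node x_alpha with alpha = beta + 1 when beta is in the mesh range. *)
Definition hstep (k : 'I_d) : R := (b k - a k) / ((J k)%:R - 1).

Definition pos (beta : 'I_d -> int) (k : 'I_d) : R := a k + (beta k)%:~R * hstep k.

Definition inTh (beta : 'I_d -> int) : bool :=
  [forall k, (0 <= beta k) && (beta k < (J k)%:Z)].

Definition inOmega (beta : 'I_d -> int) : bool :=
  [forall k, (a k < pos beta k) && (pos beta k < b k)].

Definition inClosure (beta : 'I_d -> int) : bool :=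
  [forall k, (a k <= pos beta k) && (pos beta k <= b k)].

Definition interior (beta : 'I_d -> int) : bool := inTh beta && inOmega beta.

Definition onBdry (beta : 'I_d -> int) : bool :=
  [&& inTh beta, inClosure beta & ~~ inOmega beta].

Definition shift (beta : 'I_d -> int) (i : 'I_d) (s : int) : 'I_d -> int :=
  fun k => if k == i then beta k + s else beta k.

Definition inS (beta : 'I_d -> int) : bool :=
  onBdry beta &&
  [exists i, interior (shift beta i 1) || interior (shift beta i (-1))].

Definition gridfun := ('I_d -> int) -> R.

Definition dplus (i : 'I_d) (V : gridfun) : gridfun :=
  fun beta => (V (shift beta i 1) - V beta) / hstep i.
Definition dminus (i : 'I_d) (V : gridfun) : gridfun :=
  fun beta => (V beta - V (shift beta i (-1))) / hstep i.
Definition d2 (i : 'I_d) (V : gridfun) : gridfun :=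
  fun beta => (V (shift beta i (-1)) - 2 * V beta + V (shift beta i 1)) / hstep i ^+ 2.
Definition lapl (V : gridfun) : gridfun :=
  fun beta => \sum_(i < d) d2 i V beta.

(* hat / tilde / bar mixed second differences; [dminus j (dplus i V)]
   is delta^-_{x_j} delta^+_{x_i} V. *)
Definition dhat (i j : 'I_d) (V : gridfun) : gridfun :=
  fun beta => 2^-1 * (dminus j (dplus i V) beta + dplus j (dminus i V) beta).
Definition dtilde (i j : 'I_d) (V : gridfun) : gridfun :=
  fun beta => 2^-1 * (dplus j (dplus i V) beta + dminus j (dminus i V) beta).
Definition dbar (i j : 'I_d) (V : gridfun) : gridfun :=
  fun beta => 2^-1 * (dhat i j V beta + dtilde i j V beta).

Definition mindex := {dffun forall k : 'I_d, 'I_(J k)}.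
Definition idx_of (al : mindex) : 'I_d -> int := fun k => ((al k : nat))%:Z.
Definition inner_node := {al : mindex | inOmega (idx_of al)}.
Definition node (p : inner_node) : 'I_d -> int := idx_of (val p).

Definition J0 : nat := #|{: inner_node}|.

(* [ext] is an admissible extension of vectors in R^{J_0} (values at the
   interior nodes) to grid functions on T'_h: it agrees with the vector at the
   interior nodes, vanishes on T_h \cap \partial Omega, and the ghost values
   are such that Delta_h V = 0 at every node of S_h. *)
Definition is_ghost_extension (ext : (inner_node -> R) -> gridfun) : Prop :=
  [/\ forall v (p : inner_node), ext v (node p) = v p,
      forall v beta, onBdry beta -> ext v beta = 0
    & forall v beta, inS beta -> lapl (ext v) beta = 0].

(* J_0 x J_0 matrix representing v |-> (op (ext v))(x_alpha), x_alpha interior;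
   column q is the image of the q-th unit vector. *)
Definition opmx (ext : (inner_node -> R) -> gridfun) (op : gridfun -> gridfun)
  : 'M[R]_J0 :=
  \matrix_(p, q) op (ext (fun r => (r == enum_val q)%:R)) (node (enum_val p)).

Definition Dtilde0 ext (i j : 'I_d) := opmx ext (dtilde i j).
Definition Dhat0 ext (i j : 'I_d) := opmx ext (dhat i j).
Definition Dbar0 ext (i j : 'I_d) := opmx ext (dbar i j).

End Grid.

Definition spd (R : realFieldType) (n : nat) (A : 'M[R]_n) : Prop :=
  A^T = A /\ forall x : 'cV[R]_n, x != 0 -> 0 < (x^T *m A *m x) 0 0.

Definition mxgt (R : realFieldType) (n : nat) (X Y : 'M[R]_n) : Prop := spd (X - Y).

(* Main.v *)
Require Import Defs.
From HB Require Import structures.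
From mathcomp Require Import all_boot all_order all_algebra.
From mathcomp Require Import reals zify ring lra.
From Stdlib Require Import FunctionalExtensionality.
Import Order.TTheory GRing.Theory Num.Theory.
Local Open Scope ring_scope.

Section Proof.
Variables (R : realType) (d : nat) (a b : 'I_d -> R) (J : 'I_d -> nat).
Variable (ext : (inner_node a b J -> R) -> gridfun R d).
Hypothesis Hab : forall k, a k < b k.
Hypothesis HJ : forall k, (2 <= J k)%N.
Hypothesis Hext : is_ghost_extension ext.

Local Notation h := (hstep a b J).
Local Notation gf := (gridfun R d).
Local Notation inode := (inner_node a b J).
Implicit Types (be g : 'I_d -> int) (x y : inode -> R) (k l i j : 'I_d) (s t : int) (v : inode -> R) (f V : gf).

Lemma h_gt0 k : 0 < h k.
Proof.
rewrite /hstep divr_gt0 // ?subr_gt0 //.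
have := HJ k; rewrite -(ler_nat R) => H. lra.
Qed.

Lemma hb k : b k = a k + ((J k)%:Z - 1)%:~R * h k.
Proof.
rewrite /hstep rmorphB /= mulrC mulfVK; first ring.
have := HJ k; rewrite -(ltr_nat R) => H. 
by rewrite subr_eq0 gt_eqF.
Qed.

Definition intr (be : 'I_d -> int) : bool :=
  [forall l, (0 < be l) && (be l < (J l)%:Z - 1)].
Definition inbox (be : 'I_d -> int) : bool :=
  [forall l, (0 <= be l) && (be l <= (J l)%:Z - 1)].

Lemma intrP be : reflect (forall l, 0 < be l /\ be l < (J l)%:Z - 1) (intr be).
Proof.
apply: (iffP forallP) => H l; first by case/andP: (H l).
by case: (H l) => -> ->.
Qed.
Lemma inboxP be : reflect (forall l, 0 <= be l /\ be l <= (J l)%:Z - 1) (inbox be).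
Proof.
apply: (iffP forallP) => H l; first by case/andP: (H l).
by case: (H l) => -> ->.
Qed.

Lemma inOmegaE be : inOmega a b J be = intr be.
Proof.
apply/forallP/intrP => H l; have := H l; rewrite /pos.
- case/andP; rewrite ltrDl pmulr_lgt0 ?h_gt0 // ltr0z => -> .
  by rewrite {1}hb ltrD2l ltr_pM2r ?h_gt0 // ltr_int.
- case=> H1 H2; apply/andP; split.
  + by rewrite ltrDl pmulr_lgt0 ?h_gt0 // ltr0z.
  + by rewrite {1}hb ltrD2l ltr_pM2r ?h_gt0 // ltr_int.
Qed.

Lemma inClosureE be : inClosure a b J be = inbox be.
Proof.
apply/forallP/inboxP => H l; have := H l; rewrite /pos.
- case/andP; rewrite lerDl pmulr_lge0 ?h_gt0 // ler0z => -> .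
  by rewrite {1}hb lerD2l ler_pM2r ?h_gt0 // ler_int.
- case=> H1 H2; apply/andP; split.
  + by rewrite lerDl pmulr_lge0 ?h_gt0 // ler0z.
  + by rewrite {1}hb lerD2l ler_pM2r ?h_gt0 // ler_int.
Qed.

Lemma inTh_box be : inbox be -> inTh J be.
Proof. move/inboxP=> H; apply/forallP => l; have := H l; case=> H1 H2. apply/andP; lia. Qed.

Lemma intr_box be : intr be -> inbox be.
Proof. move/intrP=> H; apply/inboxP => l; have := H l; lia. Qed.

Lemma onBdryE be : inbox be -> ~~ intr be -> onBdry a b J be.
Proof. by move=> H1 H2; rewrite /onBdry inTh_box // inClosureE H1 inOmegaE. Qed.

Lemma interiorE be : interior a b J be = intr be.
Proof. rewrite /interior inOmegaE; case H: (intr be); rewrite ?andbF ?andbT //.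
exact/inTh_box/intr_box. Qed.


Definition eqg (x y : 'I_d -> int) : bool := [forall l, x l == y l].
Definition lk (v : inode -> R) : gf := fun be => \sum_(r : inode) (eqg (node r) be)%:R * v r.

Lemma eqg_eq (x y : 'I_d -> int) : eqg x y -> x = y.
Proof. move/forallP=> H; apply: functional_extensionality => l; exact/eqP. Qed.

Lemma node_intr (r : inode) : intr (node r).
Proof. rewrite -inOmegaE; exact: (valP r). Qed.

Lemma eqg_node (r p : inode) : eqg (node r) (node p) = (r == p).
Proof.
apply/idP/eqP => [H|->]; last by apply/forallP.
apply: val_inj; apply/ffunP => l; apply: ord_inj.
have /forallP/(_ l)/eqP := H; rewrite /node /idx_of; by case.
Qed.

Lemma intr_node be : intr be -> exists p : inode, node p = be.
Proof.
move=> H; have Hk : forall k, (absz (be k) < J k)%N.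
  move=> k; have [H1 H2] := intrP _ H k. lia.
pose al : mindex J := @finfun _ (fun k => 'I_(J k)) (fun k => Ordinal (Hk k)).
have E : idx_of al = be.
  apply: functional_extensionality => k; rewrite /idx_of /al ffunE /=.
  have [H1 H2] := intrP _ H k. lia.
have Hom : inOmega a b J (idx_of al) by rewrite E inOmegaE.
by exists (exist _ al Hom).
Qed.

Lemma lk_node v (p : inode) : lk v (node p) = v p.
Proof.
rewrite /lk (bigD1 p) //= eqg_node eqxx mul1r big1 ?addr0 // => r /negbTE Hr.
by rewrite eqg_node Hr mul0r.
Qed.

Lemma lk_nintr v be : ~~ intr be -> lk v be = 0.
Proof.
move=> H; rewrite /lk big1 // => r _.
case E: (eqg (node r) be); last by rewrite mul0r.
by move: H; rewrite -(eqg_eq _ _ E) node_intr.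
Qed.

Lemma E_inbox v be : inbox be -> ext v be = lk v be.
Proof.
case: Hext => H1 H2 H3 Hb.
case Hi: (intr be).
  by have [p <-] := intr_node _ Hi; rewrite H1 lk_node.
by rewrite H2 ?lk_nintr ?Hi // onBdryE // Hi.
Qed.


Definition sP k (f : gf) : gf := fun be => f (shift be k 1) - f be.
Definition sM k (f : gf) : gf := fun be => f be - f (shift be k (-1)).
Definition sS k (f : gf) : gf :=
  fun be => f (shift be k (-1)) - 2 * f be + f (shift be k 1).
Definition U k v : gf := fun g => if intr g then sS k (lk v) g else 0.

Lemma shiftK be k : shift (shift be k (-1)) k 1 = be.
Proof.
apply: functional_extensionality => l; rewrite /shift.
by case: (l =P k) => // _; rewrite addrNK.
Qed.
Lemma shiftK' be k : shift (shift be k 1) k (-1) = be.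
Proof.
apply: functional_extensionality => l; rewrite /shift.
by case: (l =P k) => // _; rewrite addrK.
Qed.
Lemma shiftC be k l s t : k <> l -> shift (shift be k s) l t = shift (shift be l t) k s.
Proof.
move=> kl; apply: functional_extensionality => m; rewrite /shift.
have lk : (l == k) = false by apply/eqP; exact: nesym.
by case: (eqVneq m l) => [->|ml]; rewrite ?lk.
Qed.

Lemma sS_MP k f be : sS k f be = sM k (sP k f) be.
Proof. rewrite /sS /sM /sP shiftK; ring. Qed.

Lemma O_eq i j V be : dtilde a b J i j V be - dhat a b J i j V be
   = (2 * h i * h j)^-1 * sS j (sS i V) be.
Proof.
rewrite /dtilde /dhat /dplus /dminus /sS.
have := h_gt0 i; have := h_gt0 j => Hj Hi.
field; apply/andP; split; exact: lt0r_neq0.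
Qed.

Lemma shift_at be k s l : shift be k s l = if l == k then be l + s else be l.
Proof. by []. Qed.

Lemma sS_intr v i g : intr g -> sS i (ext v) g = sS i (lk v) g.
Proof.
move=> /intrP H; rewrite /sS !E_inbox //; apply/inboxP => l; rewrite ?shift_at;
  case: (l =P i) => _; have := H l; lia.
Qed.

Lemma sS_ghost v i be t : intr be -> (t = 1 \/ t = -1) ->
  ~~ intr (shift be i t) -> sS i (ext v) (shift be i t) = 0.
Proof.
case: Hext => H1 H2 H3 /intrP Hbe Ht Hn.
set g := shift be i t.
have Hgl : forall l, l != i -> g l = be l by move=> l /negbTE; rewrite /g shift_at => ->.
have Hgi : g i = be i + t by rewrite /g shift_at eqxx.
have Hgi' : g i = 0 \/ g i = (J i)%:Z - 1.
  have := Hbe i; case: (ltP 0 (g i)) => A; case: (ltP (g i) ((J i)%:Z - 1)) => B; try lia.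
  exfalso; move/negP: Hn; apply; rewrite -/g; apply/intrP => l; case: (l =P i) => [->|/eqP li]; first by lia.
  by rewrite Hgl.
have Hgb : inbox g.
  apply/inboxP => l; case: (l =P i) => [->|/eqP li]; first by have := Hbe i; lia.
  by rewrite Hgl //; have := Hbe l; lia.
have HS : inS a b J g.
  rewrite /inS onBdryE //; apply/existsP; exists i; rewrite !interiorE.
  case: Ht => Ht; rewrite /g Ht ?shiftK ?shiftK'; apply/orP; [right|left]; apply/intrP; exact Hbe.
have := H3 v g HS; rewrite /lapl (bigD1 i) //= big1 ?addr0.
  rewrite /d2 => /eqP; rewrite mulf_eq0 invr_eq0 expf_eq0 (negbTE (lt0r_neq0 (h_gt0 i))) andbF orbF.
  by move/eqP.
move=> k ki.
have ik : i != k by rewrite eq_sym.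
have Bk : forall s, (s = 1 \/ s = -1) -> onBdry a b J (shift g k s).
  move=> s Hs; apply: onBdryE.
  - apply/inboxP => l; rewrite shift_at; case: (l =P k) => [->|/eqP lk].
      by rewrite Hgl //; have := Hbe k; lia.
    exact: (inboxP _ Hgb l).
  - apply/negP => /intrP H; have := H i; rewrite shift_at (negbTE ik); lia.
have Bg : onBdry a b J g by apply: onBdryE.
rewrite /d2 (H2 _ _ (Bk (-1) _)) ?(H2 _ _ (Bk 1 _)) ?(H2 _ _ Bg); try by [left|right].
by rewrite mulr0 !subr0 addr0 mul0r.
Qed.


Lemma sSE_U v i be t : intr be -> (t = 1 \/ t = -1) ->
  sS i (ext v) (shift be i t) = U i v (shift be i t).
Proof.
move=> Hb Ht; rewrite /U; case H: (intr (shift be i t)); first exact: sS_intr.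
by rewrite sS_ghost // H.
Qed.

Lemma sSE_lk v i j be t : i <> j -> intr be -> (t = 1 \/ t = -1) ->
  sS i (ext v) (shift be j t) = sS i (lk v) (shift be j t).
Proof.
move=> ij /intrP Hb Ht; rewrite /sS !E_inbox //; apply/inboxP => l; rewrite ?shift_at;
  case: (l =P i) => [li|_]; case: (l =P j) => [lj|_];
  try (exfalso; apply: ij; congruence); have := Hb l; lia.
Qed.

Definition Jm : nat := \max_(k : 'I_d) J k.
Definition N : nat := (Jm + 7).+1.
Definition Box := {ffun 'I_d -> 'I_N}.
Definition emb (c : Box) : 'I_d -> int := fun l => (c l : nat)%:Z - 3.
Definition Sb f : R := \sum_(c : Box) f (emb c).
Definition inB be : Prop := forall l, -2 <= be l <= Jm%:Z + 3.
Definition ss f : Prop := forall be, f be != 0 -> forall l, -1 <= be l <= Jm%:Z.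

Lemma JJm k : (J k <= Jm)%N.
Proof. by rewrite /Jm; apply: (@leq_bigmax _ J). Qed.

Lemma SI (F : gf) k : (forall be, F be != 0 -> inB be) ->
  Sb (fun be => F (shift be k 1)) = Sb F.
Proof.
move=> HF.
have HF0 : forall be, ~ inB be -> F be = 0.
  by move=> be Hn; case: (eqVneq (F be) 0) => // /HF.
pose sg (c : Box) : Box := [ffun l => if l == k then ordS (c l) else c l].
have inj : injective sg.
  move=> c c' /ffunP H; apply/ffunP => l; have := H l; rewrite !ffunE.
  case: eqP => _ //; exact: ordS_inj.
rewrite /Sb [RHS](reindex_inj inj) /=; apply: eq_bigr => c _.
have Hck := ltn_ord (c k).
case: (ltnP (c k) N.-1) => Hc.
  congr F; apply: functional_extensionality => l; rewrite /emb /sg ffunE shift_at.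
  case: eqP => [->|] //=; rewrite modn_small; last by rewrite /N in Hc *; lia.
  lia.
rewrite !HF0 // /inB => /(_ k); rewrite /emb.
  have E : (c k).+1 = N by rewrite /N in Hc Hck *; lia.
  by rewrite /sg ffunE eqxx /= E modnn.
by rewrite /shift eqxx; rewrite /N in Hc Hck *; lia.
Qed.

Lemma SBP f (G : gf) k : ss f ->
  Sb (fun be => f be * sM k G be) = - Sb (fun be => sP k f be * G be).
Proof.
move=> Hf.
have E : Sb (fun be => f be * G (shift be k (-1))) = Sb (fun be => f (shift be k 1) * G be).
  rewrite -(@SI (fun be => f be * G (shift be k (-1))) k).
    by apply: eq_bigr => c _; rewrite shiftK'.
  move=> be; case: (eqVneq (f be) 0) => [->|/Hf H]; first by rewrite mul0r eqxx.
  by move=> _ l; have := H l; lia.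
rewrite /Sb /sM /sP.
have -> : \sum_(c : Box) f (emb c) * (G (emb c) - G (shift (emb c) k (-1))) =
  \sum_(c : Box) f (emb c) * G (emb c) - \sum_(c : Box) f (emb c) * G (shift (emb c) k (-1)).
  by rewrite -sumrB; apply: eq_bigr => c _; ring.
rewrite [X in _ - X]E /Sb -sumrB -sumrN; apply: eq_bigr => c _; ring.
Qed.


Lemma emb_inj : injective emb.
Proof.
move=> c c' H; apply/ffunP => l; apply: ord_inj.
move: (congr1 (fun F : 'I_d -> int => F l) H); rewrite /emb /=; lia.
Qed.

Lemma emb_ex be : (forall l, -3 <= be l <= Jm%:Z + 4) -> exists c, emb c = be.
Proof.
move=> H.
exists [ffun l => inord (absz (be l + 3)) : 'I_N].
apply: functional_extensionality => l; rewrite /emb ffunE inordK; have := H l; lia.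
Qed.

Lemma sum_e (F : inode -> R) p : \sum_(r : inode) (r == p)%:R * F r = F p.
Proof.
rewrite (bigD1 p) //= eqxx mul1r big1 ?addr0 // => r /negbTE ->; by rewrite mul0r.
Qed.

Lemma Sb_lk x (F : gf) : Sb (fun be => lk x be * F be) = \sum_(r : inode) x r * F (node r).
Proof.
rewrite /Sb /lk; under eq_bigr do rewrite mulr_suml.
rewrite exchange_big /=; apply: eq_bigr => r _.
have Hr := node_intr r.
have [c0 Hc0] : exists c, emb c = node r.
  apply: emb_ex => l; have [H1 H2] := intrP _ Hr l; have := JJm l; lia.
rewrite (bigD1 c0) //= Hc0 big1 ?addr0.
  by rewrite (_ : eqg _ _ = true) ?mul1r //; apply/forallP.
move=> c /negbTE Hc; case E: (eqg (node r) (emb c)); last by rewrite !mul0r.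
by move: Hc; rewrite (@emb_inj _ _ (etrans Hc0 (eqg_eq _ _ E))) eqxx.
Qed.

Lemma sumsq0 (F : Box -> R) : \sum_c F c ^+ 2 = 0 -> forall c, F c = 0.
Proof.
move=> /eqP; rewrite psumr_eq0; last by move=> c _; exact: sqr_ge0.
move/allP => H c; have := H c (mem_index_enum c); rewrite implyTb sqrf_eq0.
by move/eqP.
Qed.

Lemma ss_lk x : ss (lk x).
Proof.
move=> be H l; case Hi: (intr be); last by move: H; rewrite lk_nintr ?Hi ?eqxx.
have [H1 H2] := intrP _ Hi l; have := JJm l; lia.
Qed.

Lemma ss_U i x : ss (U i x).
Proof.
move=> be; rewrite /U; case Hi: (intr be); last by rewrite eqxx.
move=> _ l; have [H1 H2] := intrP _ Hi l; have := JJm l; lia.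
Qed.

Lemma ss_sP j x : ss (sP j (lk x)).
Proof.
move=> be; rewrite /sP; case Hi: (intr be); last first.
  rewrite (@lk_nintr x be) ?Hi // subr0.
  case Hj: (intr (shift be j 1)); last by rewrite lk_nintr ?Hj ?eqxx.
  move=> _ l; have [H1 H2] := intrP _ Hj l; move: H1 H2; have := JJm l.
  rewrite shift_at; case: (l =P j) => _; lia.
move=> _ l; have [H1 H2] := intrP _ Hi l; have := JJm l; lia.
Qed.

Lemma lemZ f k : (forall be, (forall l, 0 <= be l <= Jm%:Z) -> sP k f be = 0) ->
  (forall be, (J k)%:Z - 1 <= be k -> f be = 0) ->
  forall be, (forall l, 0 <= be l <= Jm%:Z) -> f be = 0.
Proof.
move=> HP H0.
suff: forall n : nat, forall be, (forall l, 0 <= be l <= Jm%:Z) ->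
    (J k)%:Z - 1 - be k <= n%:Z -> f be = 0.
  move=> S be Hb; have HH := S (absz ((J k)%:Z - 1 - be k)%R) be Hb; apply: HH; lia.
elim=> [|n IH] be Hb Hn; first by apply: H0; lia.
case: (lerP ((J k)%:Z - 1) (be k)) => Hk; first exact: H0.
have := HP be Hb; rewrite /sP IH.
- by move/eqP; rewrite sub0r oppr_eq0 => /eqP.
- move=> l; rewrite shift_at; case: (l =P k) => [->|_]; last exact: Hb.
  have := Hb k; have := JJm k; lia.
- rewrite shift_at eqxx; lia.
Qed.


Definition e' (s : inode) : inode -> R := fun r => (r == s)%:R.
Definition Mf i j (r s : inode) : R :=
  dtilde a b J i j (ext (e' s)) (node r) - dhat a b J i j (ext (e' s)) (node r).

Lemma lk_lin y be : \sum_(s : inode) y s * lk (e' s) be = lk y be.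
Proof.
have lk_e : forall s : inode, lk (e' s) be = (eqg (node s) be)%:R.
  by move=> s; rewrite /lk /e'; under eq_bigr do rewrite mulrC; rewrite sum_e.
under eq_bigr do rewrite lk_e.
by rewrite /lk; apply: eq_bigr => s _; rewrite mulrC.
Qed.

Lemma sS_lin k (F : inode -> gf) y be :
  \sum_(s : inode) y s * sS k (F s) be = sS k (fun g => \sum_(s : inode) y s * F s g) be.
Proof.
rewrite /sS mulr_sumr -sumrB -big_split /=; apply: eq_bigr => s _; ring.
Qed.

Lemma sP_lin k (F : inode -> gf) y be :
  \sum_(s : inode) y s * sP k (F s) be = sP k (fun g => \sum_(s : inode) y s * F s g) be.
Proof.
rewrite /sP -sumrB; apply: eq_bigr => s _; ring.
Qed.

Lemma U_lin i y be : \sum_(s : inode) y s * U i (e' s) be = U i y be.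
Proof.
rewrite /U; case: (intr be); last by rewrite big1 // => s _; rewrite mulr0.
rewrite sS_lin; congr sS; apply: functional_extensionality => g; exact: lk_lin.
Qed.

Lemma sS_ext k (G G' : gf) be : G (shift be k (-1)) = G' (shift be k (-1)) ->
  G be = G' be -> G (shift be k 1) = G' (shift be k 1) -> sS k G be = sS k G' be.
Proof. by rewrite /sS => -> -> ->. Qed.

Lemma MfE_eq i (r s : inode) :
  Mf i i r s = (2 * h i * h i)^-1 * sS i (U i (e' s)) (node r).
Proof.
rewrite /Mf O_eq; congr (_ * _); have Hr := node_intr r.
apply: sS_ext; rewrite ?sSE_U //; try by [left|right].
by rewrite sS_intr // /U Hr.
Qed.

Lemma MfE_ne i j (r s : inode) : i <> j ->
  Mf i j r s = (2 * h i * h j)^-1 * sS j (sS i (lk (e' s))) (node r).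
Proof.
move=> ij; rewrite /Mf O_eq; congr (_ * _); have Hr := node_intr r.
apply: sS_ext; rewrite ?sSE_lk //; try by [left|right].
by rewrite sS_intr.
Qed.

Lemma sPsS i j (F : gf) be : i <> j -> sP j (sS i F) be = sS i (sP j F) be.
Proof.
move=> ij; rewrite /sP /sS !(shiftC be _ _ 1 _ (nesym ij)); ring.
Qed.

Definition Bf i j x y := \sum_(r : inode) x r * \sum_(s : inode) y s * Mf i j r s.

Lemma Bf_eq i x y : Bf i i x y = (2 * h i * h i)^-1 * Sb (fun be => U i y be * U i x be).
Proof.
have -> : Bf i i x y = (2 * h i * h i)^-1 * Sb (fun be => lk x be * sS i (U i y) be).
  rewrite Sb_lk mulr_sumr /Bf; apply: eq_bigr => r _.
  under eq_bigr do rewrite MfE_eq mulrCA.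
  rewrite -mulr_sumr sS_lin mulrCA; congr (_ * (_ * sS _ _ _)).
  apply: functional_extensionality => g; exact: U_lin.
congr (_ * _).
have -> : Sb (fun be => lk x be * sS i (U i y) be) = Sb (fun be => lk x be * sM i (sP i (U i y)) be).
  by apply: eq_bigr => c _; rewrite sS_MP.
rewrite SBP; last exact: ss_lk.
have -> : Sb (fun be => sP i (lk x) be * sP i (U i y) be) = Sb (fun be => sP i (U i y) be * sP i (lk x) be).
  by apply: eq_bigr => c _; rewrite mulrC.
rewrite -SBP; last exact: ss_U.
apply: eq_bigr => c _; rewrite -sS_MP /U.
by case: (intr (emb c)); rewrite ?mul0r.
Qed.

Lemma Bf_ne i j x y : i <> j ->
  Bf i j x y = (2 * h i * h j)^-1 * Sb (fun be => sP i (sP j (lk x)) be * sP i (sP j (lk y)) be).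
Proof.
move=> ij.
have -> : Bf i j x y = (2 * h i * h j)^-1 * Sb (fun be => lk x be * sS j (sS i (lk y)) be).
  rewrite Sb_lk mulr_sumr /Bf; apply: eq_bigr => r _.
  under eq_bigr do rewrite MfE_ne // mulrCA.
  rewrite -mulr_sumr sS_lin mulrCA; congr (_ * (_ * sS _ _ _)).
  apply: functional_extensionality => g; rewrite sS_lin; congr sS.
  apply: functional_extensionality => g'; exact: lk_lin.
congr (_ * _).
have -> : Sb (fun be => lk x be * sS j (sS i (lk y)) be) = Sb (fun be => lk x be * sM j (sP j (sS i (lk y))) be).
  by apply: eq_bigr => c _; rewrite sS_MP.
rewrite SBP; last exact: ss_lk.
have -> : Sb (fun be => sP j (lk x) be * sP j (sS i (lk y)) be) =
          Sb (fun be => sP j (lk x) be * sM i (sP i (sP j (lk y))) be).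
  apply: eq_bigr => c _; rewrite sPsS //.
  by rewrite (sS_MP i (sP j (lk y))).
by rewrite SBP ?opprK //; exact: ss_sP.
Qed.


Lemma reindex_enum (G : 'I_(@J0 R d a b J) -> R) :
  \sum_q G q = \sum_(s : inode) G (enum_rank s).
Proof. rewrite (reindex (@enum_rank _)) //; exact: onW_bij (enum_rank_bij _). Qed.

Lemma Bf_sym i j x y : Bf i j x y = Bf i j y x.
Proof.
case: (eqVneq i j) => [<-|/eqP ij].
  rewrite !Bf_eq; congr (_ * _); apply: eq_bigr => c _; exact: mulrC.
rewrite !Bf_ne //; congr (_ * _); apply: eq_bigr => c _; exact: mulrC.
Qed.

Lemma Mf_Bf i j (r s : inode) : Mf i j r s = Bf i j (e' r) (e' s).
Proof.
by rewrite /Bf /e' sum_e sum_e.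
Qed.

Lemma c_gt0 i j : 0 < (2 * h i * h j)^-1.
Proof. by rewrite invr_gt0; apply: mulr_gt0; [apply: mulr_gt0|]; rewrite ?h_gt0. Qed.

Lemma Bf_ge0 i j x : 0 <= Bf i j x x.
Proof.
case: (eqVneq i j) => [<-|/eqP ij]; rewrite ?Bf_eq ?Bf_ne //;
  (apply: mulr_ge0; [exact: ltW (c_gt0 _ _)| apply: sumr_ge0 => c _; by rewrite -expr2 sqr_ge0]).
Qed.

Lemma region_node (r : inode) : forall l, 0 <= node r l <= Jm%:Z.
Proof. move=> l; have [H1 H2] := intrP _ (node_intr r) l; have := JJm l; lia. Qed.

Lemma reg_emb (P : gf) : (forall c, P (emb c) = 0) ->
  forall be, (forall l, 0 <= be l <= Jm%:Z) -> P be = 0.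
Proof.
move=> H be Hb; have [c <-] : exists c, emb c = be.
  by apply: emb_ex => l; have := Hb l; lia.
exact: H.
Qed.

Lemma Bf_0 i j x : Bf i j x x = 0 -> forall r, x r = 0.
Proof.
have Hc := lt0r_neq0 (c_gt0 i j).
have H0X : forall k be, (J k)%:Z - 1 <= be k -> lk x be = 0.
  move=> k be Hk; apply: lk_nintr; apply/negP => /intrP /(_ k); lia.
case: (eqVneq i j) => [<-|/eqP ij].
  rewrite Bf_eq => /eqP; rewrite mulf_eq0 (negbTE (lt0r_neq0 (c_gt0 i i))) /= => /eqP.
  rewrite /Sb (eq_bigr (fun c => U i x (emb c) ^+ 2)) => [/sumsq0 HU|c _]; last exact: expr2.
  have E : Sb (fun be => lk x be * sM i (sP i (lk x)) be) = 0.
    rewrite /Sb big1 // => c _; rewrite -sS_MP.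
    have := HU c; rewrite /U; case Hi: (intr (emb c)) => /= H.
      by rewrite H mulr0.
    by rewrite lk_nintr ?Hi ?mul0r.
  move: E; rewrite SBP; last exact: ss_lk.
  move=> /eqP; rewrite oppr_eq0 => /eqP.
  rewrite /Sb (eq_bigr (fun c => sP i (lk x) (emb c) ^+ 2)) => [/sumsq0 HP|c _]; last exact: expr2.
  have HX := @lemZ (lk x) i (@reg_emb _ HP) (H0X i).
  by move=> r; rewrite -lk_node HX //; exact: region_node.
rewrite Bf_ne // => /eqP; rewrite mulf_eq0 (negbTE (lt0r_neq0 (c_gt0 i j))) /= => /eqP.
rewrite /Sb (eq_bigr (fun c => sP i (sP j (lk x)) (emb c) ^+ 2)) => [/sumsq0 HP|c _]; last exact: expr2.
have HY := @lemZ (sP j (lk x)) i (@reg_emb _ HP).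
have HY' : forall be, (forall l, 0 <= be l <= Jm%:Z) -> sP j (lk x) be = 0.
  apply: HY => be Hk; rewrite /sP (H0X i be Hk) (H0X i) ?subr0 //.
  by rewrite shift_at (introF eqP ij).
have HX := @lemZ (lk x) j HY' (H0X j).
by move=> r; rewrite -lk_node HX //; exact: region_node.
Qed.

Lemma spd_of i j (A : 'M[R]_(@J0 R d a b J)) c' : 0 < c' ->
  (forall p q, A p q = c' * Mf i j (enum_val p) (enum_val q)) -> spd A.
Proof.
move=> Hc' HA; split.
  apply/matrixP => p q; rewrite mxE !HA; congr (_ * _).
  by rewrite !Mf_Bf Bf_sym.
move=> x xn0.
pose xf (r : inode) := x (enum_rank r) 0.
have -> : (x^T *m A *m x) 0 0 = c' * Bf i j xf xf.
  rewrite mxE reindex_enum /Bf mulr_sumr.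
  under eq_bigr do rewrite mxE reindex_enum.
  under eq_bigr do rewrite mulr_suml.
  rewrite exchange_big /=; apply: eq_bigr => r _.
  rewrite !mulr_sumr; apply: eq_bigr => s _.
  rewrite !mxE HA !enum_rankK /xf; ring.
rewrite pmulr_rgt0 // lt_def Bf_ge0 andbT; apply/negP => /eqP H.
move/negP: xn0; apply; apply/eqP/matrixP => p q; rewrite ord1 mxE.
by have := @Bf_0 i j xf H (enum_val p); rewrite /xf enum_valK.
Qed.

Lemma main i j :
    spd (Dtilde0 ext i j - Dhat0 ext i j) /\
    mxgt (- Dhat0 ext i j) (- Dbar0 ext i j) /\
    mxgt (- Dbar0 ext i j) (- Dtilde0 ext i j).
Proof.
split; [|split].
- apply: (@spd_of i j _ 1) => // p q; rewrite !mxE mul1r //.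
- apply: (@spd_of i j _ (2^-1)); first by rewrite invr_gt0 ltr0n.
  move=> p q; rewrite !mxE /Mf /dbar /e'; by field.
- apply: (@spd_of i j _ (2^-1)); first by rewrite invr_gt0 ltr0n.
  move=> p q; rewrite !mxE /Mf /dbar /e'; by field.
Qed.

End Proof.

Theorem lemma2p5 (R : realType) (d : nat) (a b : 'I_d -> R) (J : 'I_d -> nat)
  (ext : (inner_node a b J -> R) -> gridfun R d) :
  (2 <= d)%N ->
  (forall k, a k < b k) ->
  (forall k, 2 <= J k)%N ->
  is_ghost_extension ext ->
  forall i j : 'I_d,
    spd (Dtilde0 ext i j - Dhat0 ext i j) /\
    mxgt (- Dhat0 ext i j) (- Dbar0 ext i j) /\
    mxgt (- Dbar0 ext i j) (- Dtilde0 ext i j).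
Proof.
move=> _ Hab HJ Hext i j; exact: main.
Qed.
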